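(* Suppose that for each topological space $X$ a family $\mathbb{A}_X\subseteq\mathcal{P}(X)$ is given such that (a) $\mathbb{A}_X$ is an ideal; (b) if $Z\subseteq X$ then $\mathbb{A}_Z\subseteq\mathbb{A}_X$; (c) if $U\subseteq X$ is open then $\mathbb{A}_U=\{A\cap U:A\in\mathbb{A}_X\}$. If $X=Y\cup Z$ where the subspaces $Y$ and $Z$ are both $\mathbb{A}$-separable, then $X$ is $\mathbb{A}$-separable.
   Context: Given such an assignment $X\mapsto\mathbb{A}_X$, a space $X$ is $\mathbb{A}$-separable if for every sequence $\{D_n:n<\omega\}$ of dense subsets of $X$ there are sets $A_n\in\mathcal{P}(D_n)\cap\mathbb{A}_X$ ($n<\omega$) such that $\bigcup_{n<\omega}A_n$ is dense in $X$. *)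

(* Defs.v *)
From HB Require Import structures.
From mathcomp Require Import all_boot all_classical topology.
Set Implicit Arguments. Unset Strict Implicit. Unset Printing Implicit Defensive.
Local Open Scope classical_set_scope.

(* Subspaces of the ambient topological space T are represented by subsets
   W : set T carrying the subspace topology. *)
Section Defs.
Variable T : topologicalType.

Definition rel_open (W U : set T) : Prop := exists V : set T, open V /\ U = V `&` W.

(* D is a dense subset of the subspace W (closure in the subspace W is
   closure in T intersected with W) *)
Definition dense_in (W D : set T) : Prop := D `<=` W /\ W `<=` closure D.

Definition is_ideal (I : set (set T)) : Prop :=
  I set0 /\
  (forall A B, I A -> B `<=` A -> I B) /\
  (forall A B, I A -> I B -> I (A `|` B)).

Definition A_separable (Afam : set T -> set (set T)) (W : set T) : Prop :=
  forall D : nat -> set T, (forall n, dense_in W (D n)) ->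
  exists A : nat -> set T,
    (forall n, A n `<=` D n /\ Afam W (A n)) /\
    dense_in W (\bigcup_n A n).
End Defs.

(* Main.v *)
Require Import Defs.
From mathcomp Require Import all_boot all_classical topology.
Local Open Scope classical_set_scope.

Lemma clP (T : topologicalType) (A : set T) x :
  closure A x <-> forall O, open O -> O x -> exists y, A y /\ O y.
Proof.
split.
- move=> cl O oO Ox.
  have /cl [y [Ay Oy]] : nbhs x O by apply: open_nbhs_nbhs; split.
  by exists y.
- move=> H B; rewrite nbhsE => -[O [oO Ox] OB].
  have [y [Ay Oy]] := H O oO Ox.
  by exists y; split => //; apply: OB.
Qed.

Lemma ideal_fin (T : topologicalType) (I : set (set T)) (F : nat -> set T) :
  is_ideal I -> (forall n, I (F n)) ->
  forall k, I [set x | exists n, (n < k)%N /\ F n x].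
Proof.
move=> [I0 [Id Iu]] HF; elim=> [|k IH].
  by apply: (Id _ _ I0) => x [n [] ].
apply: (Id _ _ (Iu _ _ IH (HF k))) => x [n [nk Fx]].
rewrite ltnS leq_eqVlt in nk; case/orP: nk => [/eqP <-|nk]; first by right.
by left; exists n.
Qed.

Theorem theorem3p13 (T : topologicalType) (Afam : set T -> set (set T))
  (Hsub : forall W A, Afam W A -> A `<=` W)
  (Ha : forall W, is_ideal (Afam W))
  (Hb : forall Z W, Z `<=` W -> Afam Z `<=` Afam W)
  (Hc : forall W U, U `<=` W -> rel_open W U ->
          Afam U = [set A `&` U | A in Afam W])
  (Y Z : set T) (HX : Y `|` Z = setT) :
  A_separable Afam Y -> A_separable Afam Z -> A_separable Afam setT.
Proof.
move=> sY sZ D HD.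
have XYZ : forall x, Y x \/ Z x.
  by move=> x; have : setT x by []; rewrite -HX.
have Dcl : forall n x, closure (D n) x by move=> n x; apply: (HD n).2.
pose TY n := closure [set x | exists m, (n <= m)%N /\ D m x /\ Y x].
pose TZ n := closure [set x | exists m, (n <= m)%N /\ D m x /\ Z x].
pose EY n := [set x | (exists m, (n <= m)%N /\ D m x /\ Y x) \/ (Y x /\ ~ TY n x)].
pose EZ n := [set x | (exists m, (n <= m)%N /\ D m x /\ Z x) \/ (Z x /\ ~ TZ n x)].
have [AY [AYp AYd]] : exists A : nat -> set T,
    (forall n, A n `<=` EY n /\ Afam Y (A n)) /\ dense_in Y (\bigcup_n A n).
  apply: sY => n; split; first by move=> x [[m [_ [_ ]]]|[]].
  move=> y Yy; case: (pselect (TY n y)) => [Ty|nTy].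
    apply: (closure_subset _ Ty) => x Hx; by left.
  by apply: subset_closure; right.
have [AZ [AZp AZd]] : exists A : nat -> set T,
    (forall n, A n `<=` EZ n /\ Afam Z (A n)) /\ dense_in Z (\bigcup_n A n).
  apply: sZ => n; split; first by move=> x [[m [_ [_ ]]]|[]].
  move=> y Yy; case: (pselect (TZ n y)) => [Ty|nTy].
    apply: (closure_subset _ Ty) => x Hx; by left.
  by apply: subset_closure; right.
have [I0 [Id Iu]] := Ha setT.
exists (fun m => [set x | exists n, (n <= m)%N /\ (AY n x \/ AZ n x) /\ D m x]).
split.
  move=> m; split; first by move=> x [n [_ [_ ]]].
  apply: (Id _ _ (@ideal_fin T _ (fun n => AY n `|` AZ n) (Ha setT) _ m.+1)).
    by move=> n; apply: Iu; [apply: (Hb Y setT) => //; exact: (AYp n).2|apply: (Hb Z setT) => //; exact: (AZp n).2].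
  by move=> x [n [nm [Ax _]]]; exists n; split.
split => // x _; apply/clP => O oO Ox.
case: (pselect (exists n z, O z /\ ~ TY n z)) => [[n [z [Oz nTz]]]|allT].
  have oO' : open (O `&` ~` TY n) by apply: openI => //; apply: closed_openC; apply: closed_closure.
  have [w [Dw [Ow nTw]]] := (clP _ _ _).1 (Dcl n z) _ oO' (conj Oz nTz).
  have Zw : Z w.
    case: (XYZ w) => // Yw; exfalso; apply: nTw; apply: subset_closure.
    by exists n; split.
  have [v [[k _ AZv] [Ov nTv]]] := (clP _ _ _).1 (AZd.2 w Zw) _ oO' (conj Ow nTw).
  case: ((AZp k).1 v AZv) => [[m [km [Dv Zv]]]|[Zv nTZv]].
    by exists v; split => //; exists m => //; exists k; split => //; split => //; right.
  exfalso.
  have oO'' : open ((O `&` ~` TY n) `&` ~` TZ k) by apply: openI => //; apply: closed_openC; apply: closed_closure.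
  have [u [Du [[Ou nTu] nTZu]]] := (clP _ _ _).1 (Dcl (maxn n k) v) _ oO'' (conj (conj Ov nTv) nTZv).
  case: (XYZ u) => Yu.
    apply: nTu; apply: subset_closure; exists (maxn n k); split => //; exact: leq_maxl.
  apply: nTZu; apply: subset_closure; exists (maxn n k); split => //; exact: leq_maxr.
have OT : forall n, O `<=` TY n.
  move=> n z Oz; apply: contrapT => nT; apply: allT; by exists n, z.
have [w [[m [_ [Dw Yw]]] Ow]] := (clP _ _ _).1 (OT 0%N x Ox) _ oO Ox.
have [v [[k _ AYv] Ov]] := (clP _ _ _).1 (AYd.2 w Yw) _ oO Ow.
case: ((AYp k).1 v AYv) => [[m' [km [Dv Yv]]]|[Yv nTv]].
  by exists v; split => //; exists m' => //; exists k; split => //; split => //; left.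
by exfalso; apply: nTv; apply: OT.
Qed.
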